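(* Consider problem (P) under the standing assumptions stated in the context, and suppose (P) is solvable. Then the set of all globally optimal solutions of (P) is $$\mathcal{S}=\{\tilde{\mathbf{x}}\in\mathbb{R}^n : \tilde{x}_j\le x^*_j(\mathbf{A},\mathbf{b}) \text{ for all } j \text{ with } k_j=0,\ \text{and } \tilde{x}_j=x^*_j(\mathbf{A},\mathbf{b}) \text{ for all } j \text{ with } k_j>0\}.$$
   Context: Max-plus algebra: $\mathbb{R}_{\max}=\mathbb{R}\cup\{-\infty\}$ with $a\oplus b=\max\{a,b\}$ and $a\otimes b=a+b$; $\varepsilon=-\infty$. For $\mathbf{A}=(a_{ij})\in\mathbb{R}_{\max}^{m\times n}$ and $\mathbf{x}=(x_j)\in\mathbb{R}^n$, $\mathbf{A}\otimes\mathbf{x}$ is the vector with $i$th component $F_i(\mathbf{x})=\max_{1\le j\le n}(a_{ij}+x_j)$, with $r+(-\infty)=-\infty$. Vectors are compared componentwise. Problem (P): given $\mathbf{A}=(a_{ij})\in\mathbb{R}_{\max}^{m\times n}$, reals $k_1,\dots,k_n\ge 0$ not all zero, and $c\in\mathbb{R}$, let $\mathcal{X}=\{\mathbf{x}\in\mathbb{R}^n : \sum_{j=1}^n k_jx_j=c\}$ and $F(\mathbf{x})=\mathbf{A}\otimes\mathbf{x}$. A point $\tilde{\mathbf{x}}\in\mathcal{X}$ is a globally optimal solution of (P) if $F(\mathbf{x})\ge F(\tilde{\mathbf{x}})$ componentwise for every $\mathbf{x}\in\mathcal{X}$; (P) is solvable if a globally optimal solution exists. Standing assumptions: (1) no row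 of $\mathbf{A}$ consists entirely of $-\infty$ entries; (2) if the $j$th column of $\mathbf{A}$ consists entirely of $-\infty$ entries, then $k_j>0$. Let $\mathcal{J}=\{j : k_j>0\}$. Define $\mathbf{b}=(b_i)$ by $b_i=-\infty$ if $a_{ij}=-\infty$ for some $j\in\mathcal{J}$, and otherwise $b_i=\frac{\sum_{j\in\mathcal{J}}k_ja_{ij}+c}{\sum_{j\in\mathcal{J}}k_j}$. Define $\mathbf{x}^*(\mathbf{A},\mathbf{b})=(x^*_j(\mathbf{A},\mathbf{b}))$ by $x^*_j(\mathbf{A},\mathbf{b})=\min_{1\le i\le m}(b_i-a_{ij})$, with the conventions, for $r\in\mathbb{R}$: $r-(-\infty)=+\infty$, $(-\infty)-r=-\infty$, $(-\infty)-(-\infty)=+\infty$; thus $x^*_j(\mathbf{A},\mathbf{b})\in\mathbb{R}\cup\{-\infty,+\infty\}$. *)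

(* Defs.v *)
From mathcomp Require Import all_boot all_order all_algebra.
From mathcomp Require Import constructive_ereal.
Set Implicit Arguments. Unset Strict Implicit. Unset Printing Implicit Defensive.
Import Order.TTheory GRing.Theory Num.Theory.
Local Open Scope ring_scope.
Local Open Scope ereal_scope.

Section MaxPlus.
Variables (R : realFieldType) (m n : nat).

(* Entries of A live in R_max = R \cup {-oo}; we use \bar R together with the
   hypothesis (in the theorem) that no entry equals +oo. *)

Definition Fmp (A : 'M[\bar R]_(m, n)) (x : 'I_n -> R) (i : 'I_m) : \bar R :=
  \big[maxe/-oo]_(j < n) (A i j + (x j)%:E).

Definition inX (k : 'I_n -> R) (c : R) (x : 'I_n -> R) : Prop :=
  (\sum_(j < n) k j * x j)%R = c.

Definition globally_optimal (A : 'M[\bar R]_(m, n)) (k : 'I_n -> R) (c : R)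
  (xt : 'I_n -> R) : Prop :=
  inX k c xt /\ forall x, inX k c x -> forall i, Fmp A xt i <= Fmp A x i.

Definition solvable (A : 'M[\bar R]_(m, n)) (k : 'I_n -> R) (c : R) : Prop :=
  exists xt, globally_optimal A k c xt.

Definition bvec (A : 'M[\bar R]_(m, n)) (k : 'I_n -> R) (c : R) (i : 'I_m) : \bar R :=
  if [exists j : 'I_n, (0 < k j)%R && (A i j == -oo)] then -oo
  else (((\sum_(j < n | (0 < k j)%R) k j * fine (A i j)) + c)
        / (\sum_(j < n | (0 < k j)%R) k j))%:E.

Definition msub (b a : \bar R) : \bar R :=
  match a with
  | -oo => +oo
  | a'%:E => match b with
             | -oo => -oo
             | b'%:E => (b' - a')%:E
             | +oo => +oo
             end
  | +oo => -oo
  end.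

Definition xstar (A : 'M[\bar R]_(m, n)) (b : 'I_m -> \bar R) (j : 'I_n) : \bar R :=
  \big[mine/+oo]_(i < m) msub (b i) (A i j).

End MaxPlus.

(* Main.v *)
Require Import Defs.
From mathcomp Require Import all_boot all_order all_algebra.
From mathcomp Require Import constructive_ereal.
Import Order.TTheory GRing.Theory Num.Theory.
Set Implicit Arguments. Unset Strict Implicit.
Local Open Scope ring_scope.
Local Open Scope ereal_scope.

Section Pf.
Variables (R : realFieldType) (m n : nat) (A : 'M[\bar R]_(m, n)) (k : 'I_n -> R) (c : R).
Hypothesis Hpinf : forall i j, A i j != +oo.
Hypothesis Hk0 : forall j, (0 <= k j)%R.
Hypothesis Hkex : exists j, k j != 0%R.

Let K := (\sum_(j < n | (0 < k j)%R) k j)%R.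

Lemma exJ : exists j, (0 < k j)%R.
Proof. by case: Hkex => j hj; exists j; rewrite lt_def hj Hk0. Qed.

Lemma K_gt0 : (0 < K)%R.
Proof.
case: exJ => j kj; apply: (lt_le_trans kj).
by rewrite /K (bigD1 j) //= lerDl sumr_ge0 // => i /andP[].
Qed.

Lemma Kne0 : K != 0%R.
Proof. by rewrite gt_eqF // K_gt0. Qed.

Lemma sumJ (f : 'I_n -> R) :
  (\sum_(j < n) k j * f j = \sum_(j < n | (0 < k j)%R) k j * f j)%R.
Proof.
rewrite [RHS]big_mkcond /=; apply: eq_bigr => j _.
case: ifP => // /negbT; rewrite lt_def negb_and negbK => /orP[/eqP->|].
  by rewrite mul0r.
by rewrite Hk0.
Qed.

Lemma Fmp_ge x i j : A i j + (x j)%:E <= Fmp A x i.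
Proof. exact: (le_bigmax _ (fun j => A i j + (x j)%:E)). Qed.

Lemma Fmp_le x i y : (forall j, A i j + (x j)%:E <= y) -> Fmp A x i <= y.
Proof. by move=> H; apply: bigmax_le => [|j _]; [exact: leNye|apply: H]. Qed.

Definition rowfin i := ~~ [exists j, (0 < k j)%R && (A i j == -oo)].

Definition bb i := (((\sum_(j < n | (0 < k j)%R) k j * fine (A i j)) + c) / K)%R.

Lemma bvecE i : rowfin i -> bvec A k c i = (bb i)%:E.
Proof. by rewrite /bvec /rowfin => /negbTE ->. Qed.

Lemma finJ i j : rowfin i -> (0 < k j)%R -> A i j = (fine (A i j))%:E.
Proof.
move=> /existsPn /(_ j); rewrite negb_and => /orP[/negP //|].
by move: (Hpinf i j); case: (A i j).
Qed.

Lemma msubP (a : \bar R) b y : a != +oo -> (y%:E <= msub b%:E a) = (a + y%:E <= b%:E).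
Proof.
case: a => [r| |] //= _.
  by rewrite !lee_fin lerBrDl.
by rewrite leey leNye.
Qed.

Lemma lowb x i : inX k c x -> rowfin i -> (bb i)%:E <= Fmp A x i.
Proof.
move=> hx hi; case: exJ => j0 kj0.
have hF := Fmp_ge x i j0; rewrite (finJ hi kj0) in hF.
case E: (Fmp A x i) hF => [r| |] hF; last by [].
  rewrite lee_fin /bb ler_pdivrMr ?K_gt0 //.
  rewrite -hx sumJ /K mulr_sumr -big_split /=.
  apply: ler_sum => j kj; rewrite -mulrDr. idtac.
  have := Fmp_ge x i j; rewrite E (finJ hi kj) -EFinD lee_fin.
  by move=> /= h; rewrite mulrC; apply: ler_wpM2r.
by rewrite leey.
Qed.

Lemma eqJ x i j : inX k c x -> rowfin i -> Fmp A x i <= (bb i)%:E ->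
  (0 < k j)%R -> (fine (A i j) + x j = bb i)%R.
Proof.
move=> hx hi hle kj.
have ht : forall j, (0 < k j)%R -> (fine (A i j) + x j <= bb i)%R.
  move=> j' kj'; rewrite -lee_fin EFinD -(finJ hi kj').
  exact: le_trans (Fmp_ge x i j') hle.
have hs : (\sum_(j < n | (0 < k j)%R) k j * (bb i - (fine (A i j) + x j)) = 0)%R.
  under eq_bigr do rewrite mulrBr mulrDr.
  rewrite sumrB big_split /= -mulr_suml -(sumJ x) hx.
  by rewrite [X in (X - _)%R]mulrC /bb divfK ?Kne0 // subrr.
have hnn : forall j', (0 < k j')%R -> (0 <= k j' * (bb i - (fine (A i j') + x j')))%R.
  by move=> j' kj'; rewrite mulr_ge0 ?Hk0 // subr_ge0 ht.
have := @psumr_eq0P _ _ _ _ hnn hs j kj.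
move=> /eqP; rewrite mulf_eq0 (gt_eqF kj) /= subr_eq0 => /eqP.
by move=> ->.
Qed.

Lemma attain i : rowfin i -> exists x, inX k c x /\ Fmp A x i <= (bb i)%:E.
Proof.
move=> hi; exists (fun j => bb i - fine (A i j))%R; split.
  rewrite /inX sumJ.
  under eq_bigr do rewrite mulrBr.
  rewrite sumrB -mulr_suml mulrC /bb divfK ?Kne0 //.
  by rewrite addrC addKr.
apply: Fmp_le => j; move: (Hpinf i j); case: (A i j) => [r| |] //= _.
  by rewrite -EFinD lee_fin addrC subrK.
exact: leNye.
Qed.

Lemma unbounded i j0 r : (0 < k j0)%R -> A i j0 = -oo ->
  exists x, inX k c x /\ Fmp A x i <= r%:E.
Proof.
move=> kj0 aj0.
pose S := (\sum_(j < n | j != j0) k j * (r - fine (A i j)))%R.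
exists (fun j => if j == j0 then (c - S) / k j0 else r - fine (A i j))%R; split.
  rewrite /inX (bigD1 j0) //= eqxx mulrC divfK ?gt_eqF //.
  rewrite (eq_bigr (fun j => k j * (r - fine (A i j)))%R); first by rewrite subrK.
  by move=> j /negbTE ->.
apply: Fmp_le => j; case: eqP => [->|_]; first by rewrite aj0 /=; exact: leNye.
move: (Hpinf i j); case: (A i j) => [s| |] //= _.
by rewrite -EFinD lee_fin addrC subrK.
exact: leNye.
Qed.

End Pf.

Theorem theorem4 (R : realFieldType) (m n : nat) (A : 'M[\bar R]_(m, n))
    (k : 'I_n -> R) (c : R) :
  (0 < m)%N ->
  (forall i j, A i j != +oo) ->
  (forall j, (0 <= k j)%R) ->
  (exists j, k j != 0%R) ->
  (forall i, exists j, A i j != -oo) ->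
  (forall j, (forall i, A i j = -oo) -> (0 < k j)%R) ->
  solvable A k c ->
  forall xt : 'I_n -> R,
    globally_optimal A k c xt <->
    ((forall j, k j = 0%R -> (xt j)%:E <= xstar A (bvec A k c) j) /\
     (forall j, (0 < k j)%R -> (xt j)%:E = xstar A (bvec A k c) j)).
Proof.
move=> m0 Hp Hk0 Hkex Hrow _ [x0 [hx0 opt0]].
have hfin : forall i, rowfin A k i.
  move=> i; apply/negP => /existsP [j0 /andP [kj0 /eqP aj0]].
  have [j1 aj1] := Hrow i.
  have := @Fmp_ge _ _ _ A x0 i j1.
  move: (Hp i j1) aj1; case: (A i j1) => [a| |] //= _ _ h1.
  have [x [hx hF]] := unbounded c Hp (a + x0 j1 - 1)%R kj0 aj0.
  have := le_trans h1 (le_trans (opt0 x hx i) hF).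
  by rewrite -EFinD lee_fin lerBrDr gerDl ler10.
have hopt : forall xt, globally_optimal A k c xt -> forall i, Fmp A xt i <= (bb A k c i)%:E.
  move=> xt [_ opt] i; have [x [hx hF]] := attain c Hp Hk0 Hkex (hfin i).
  exact: le_trans (opt x hx i) hF.
have le_xstar : forall (xt : 'I_n -> R) j, (forall i, A i j + (xt j)%:E <= (bb A k c i)%:E) ->
    (xt j)%:E <= xstar A (bvec A k c) j.
  move=> xt j H; apply: le_bigmin => [|i _]; first exact: leey.
  by rewrite (bvecE c (hfin i)) (msubP _ _ (Hp i j)).
have xstar_le : forall (xt : 'I_n -> R) j, (xt j)%:E <= xstar A (bvec A k c) j ->
    forall i, A i j + (xt j)%:E <= (bb A k c i)%:E.
  move=> xt j H i; rewrite -(msubP _ _ (Hp i j)) -(bvecE c (hfin i)).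
  apply: (le_trans H); rewrite /xstar; exact: bigmin_le.
have fwd : forall xt, globally_optimal A k c xt ->
    ((forall j, k j = 0%R -> (xt j)%:E <= xstar A (bvec A k c) j) /\
     (forall j, (0 < k j)%R -> (xt j)%:E = xstar A (bvec A k c) j)).
  move=> xt hxt; have hle := hopt xt hxt; split.
    move=> j _; apply: le_xstar => i.
    exact: le_trans (@Fmp_ge _ _ _ A xt i j) (hle i).
  move=> j kj; apply/eqP; rewrite eq_le; apply/andP; split.
    apply: le_xstar => i; exact: le_trans (@Fmp_ge _ _ _ A xt i j) (hle i).
  pose i0 := Ordinal m0.
  apply: (@le_trans _ _ (msub (bvec A k c i0) (A i0 j))); first by rewrite /xstar; exact: bigmin_le.
  rewrite (bvecE c (hfin i0)) (finJ Hp (hfin i0) kj) /=.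
  have := eqJ Hp Hk0 Hkex hxt.1 (hfin i0) (hle i0) kj.
  by move=> <-; rewrite lee_fin addrC addKr.
move=> xt; split; first exact: fwd.
move=> [H1 H2].
have [_ H0] := fwd x0 (conj hx0 opt0).
have hxt : inX k c xt.
  rewrite /inX (sumJ Hk0) -hx0 /inX (sumJ Hk0); apply: eq_bigr => j kj.
  by move: (H2 j kj); rewrite -(H0 j kj); case=> ->.
split => // x hx i.
apply: le_trans (lowb Hp Hk0 Hkex hx (hfin i)).
apply: Fmp_le => j; apply: xstar_le.
have [kj|] := boolP (0 < k j)%R; first by rewrite H2.
rewrite lt_def negb_and negbK Hk0 orbF => /eqP kj; exact: H1.
Qed.
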